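(* Let $Q$ be a non-degenerate self-intersecting quadrangle of perimeter $2$. Then its dual quadrangle $Q^\circ$ is also self-intersecting.
   Context: Identify $\mathbb{R}^2$ with $\mathbb{C}$. A quadrangle $Q=ABCD$ is an ordered 4-tuple of points $A,B,C,D\in\mathbb{C}$: $A$ is the first vertex and the order $A\to B\to C\to D\to A$ is the direction of traversal. Its edge vectors are $z_1=B-A$, $z_2=C-B$, $z_3=D-C$, $z_4=A-D$, so $z_1+z_2+z_3+z_4=0$; its perimeter is $|z_1|+|z_2|+|z_3|+|z_4|$. $Q$ is non-degenerate if each pair of consecutive edge vectors $(z_1,z_2),(z_2,z_3),(z_3,z_4),(z_4,z_1)$ consists of nonzero, non-collinear vectors. A non-degenerate quadrangle is self-intersecting if one of the pairs of opposite edges (segments $AB$ and $CD$, or $BC$ and $DA$) intersect; it is convex if it is not self-intersecting and all its interior angles are less than $\pi$; it is non-convex if it is neither self-intersecting nor convex. Associated plane: for a non-degenerate $Q$ of perimeter $2$, choose $u_1,\dots,u_4\in\mathbb{C}$ with $u_k^2=z_k$, where $u_1$ is an arbitrary square root of $z_1$ and for $k=1,2,3$ the sign of $u_{k+1}$ is chosen so that $\operatorname{Im}(\overline{u_k}u_{k+1})$ has the same sign as $\operatorname{Im}(\overline{z_k}z_{k+1})$. Write $u_k=a_k+i b_k$ and $\bar a=(a_1,a_2,a_3,a_4)$, $\bar b=(b_1,b_2,b_3,b_4)$; these are orthonormal in $\mathbb{R}^4$. Let $\Pi=\operatorname{span}(\bar a,\bar b)$ and $\Pi^\perp$ its orthogonal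 complement. Dual quadrangle: choose an orthonormal basis $(\bar c,\bar d)$ of $\Pi^\perp$, put $w_k=(c_k+i d_k)^2$; then $\sum_k w_k=0$ and $\sum_k|w_k|=2$. The dual quadrangle $Q^\circ=KLMN$ is the quadrangle with $L-K=w_1$, $M-L=w_2$, $N-M=w_3$, $K-N=w_4$. It is determined up to rotation, reflection and translation. *)

(* Defs.v *)
From Stdlib Require Import Reals.
Open Scope R_scope.

Record Cpt := mkC { re : R ; im : R }.

Definition cadd (z w : Cpt) : Cpt := mkC (re z + re w) (im z + im w).
Definition csub (z w : Cpt) : Cpt := mkC (re z - re w) (im z - im w).
Definition cmul (z w : Cpt) : Cpt :=
  mkC (re z * re w - im z * im w) (re z * im w + im z * re w).
Definition csq (z : Cpt) : Cpt := cmul z z.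
Definition cscale (t : R) (z : Cpt) : Cpt := mkC (t * re z) (t * im z).
Definition czero : Cpt := mkC 0 0.
Definition cabs (z : Cpt) : R := sqrt (re z * re z + im z * im z).
(* Im(conj z * w) *)
Definition imcw (z w : Cpt) : R := re z * im w - im z * re w.

Definition good_pair (z w : Cpt) : Prop := z <> czero /\ w <> czero /\ imcw z w <> 0.

Definition z1 (A B Cc D : Cpt) := csub B A.
Definition z2 (A B Cc D : Cpt) := csub Cc B.
Definition z3 (A B Cc D : Cpt) := csub D Cc.
Definition z4 (A B Cc D : Cpt) := csub A D.

Definition perimeter (A B Cc D : Cpt) : R :=
  cabs (z1 A B Cc D) + cabs (z2 A B Cc D) + cabs (z3 A B Cc D) + cabs (z4 A B Cc D).

Definition nondegenerate (A B Cc D : Cpt) : Prop :=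
  good_pair (z1 A B Cc D) (z2 A B Cc D) /\ good_pair (z2 A B Cc D) (z3 A B Cc D) /\
  good_pair (z3 A B Cc D) (z4 A B Cc D) /\ good_pair (z4 A B Cc D) (z1 A B Cc D).

Definition segments_intersect (P Q R0 S : Cpt) : Prop :=
  exists s t : R, 0 <= s <= 1 /\ 0 <= t <= 1 /\
    cadd P (cscale s (csub Q P)) = cadd R0 (cscale t (csub S R0)).

Definition self_intersecting (A B Cc D : Cpt) : Prop :=
  nondegenerate A B Cc D /\
  (segments_intersect A B Cc D \/ segments_intersect B Cc D A).

Definition same_sign (x y : R) : Prop := 0 < x * y.

Definition admissible_roots (A B Cc D u1 u2 u3 u4 : Cpt) : Prop :=
  csq u1 = z1 A B Cc D /\ csq u2 = z2 A B Cc D /\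
  csq u3 = z3 A B Cc D /\ csq u4 = z4 A B Cc D /\
  same_sign (imcw u1 u2) (imcw (z1 A B Cc D) (z2 A B Cc D)) /\
  same_sign (imcw u2 u3) (imcw (z2 A B Cc D) (z3 A B Cc D)) /\
  same_sign (imcw u3 u4) (imcw (z3 A B Cc D) (z4 A B Cc D)).

Definition dot4 (x1 x2 x3 x4 y1 y2 y3 y4 : R) : R :=
  x1 * y1 + x2 * y2 + x3 * y3 + x4 * y4.

(* (c,d) with v_k = c_k + i d_k is an orthonormal basis of the orthogonal
   complement of span(a,b), where u_k = a_k + i b_k. *)
Definition orthonormal_basis_of_perp (u1 u2 u3 u4 v1 v2 v3 v4 : Cpt) : Prop :=
  let c := dot4 (re v1) (re v2) (re v3) (re v4) in
  let d := dot4 (im v1) (im v2) (im v3) (im v4) in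
  c (re v1) (re v2) (re v3) (re v4) = 1 /\
  d (im v1) (im v2) (im v3) (im v4) = 1 /\
  c (im v1) (im v2) (im v3) (im v4) = 0 /\
  c (re u1) (re u2) (re u3) (re u4) = 0 /\
  c (im u1) (im u2) (im u3) (im u4) = 0 /\
  d (re u1) (re u2) (re u3) (re u4) = 0 /\
  d (im u1) (im u2) (im u3) (im u4) = 0.

(* Main.v *)
Require Import Defs.
From Stdlib Require Import Reals Lra Psatz.
Open Scope R_scope.

Lemma frac_bounds x y : x*y < 0 -> 0 <= x/(x-y) <= 1.
Proof.
  intros H. destruct (Rlt_or_le 0 x) as [Hx|Hx].
  - assert (y < 0) by nra. assert (0 < x - y) by lra.
    assert (Hq : 0 < / (x-y)) by (apply Rinv_0_lt_compat; lra).
    assert (He : (x-y) * / (x-y) = 1) by (field; lra).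
    unfold Rdiv. split; nra.
  - assert (x < 0) by (destruct Hx as [Hx|Hx]; [lra| subst; lra]). assert (0 < y) by nra. assert (x - y < 0) by lra.
    assert (Hq : / (x-y) < 0) by (apply Rinv_lt_0_compat; lra).
    assert (He : (x-y) * / (x-y) = 1) by (field; lra).
    unfold Rdiv. split; nra.
Qed.

Lemma inter_gen (P Q R0 S : Cpt) :
  imcw (csub Q P) (csub R0 P) * imcw (csub Q P) (csub S P) < 0 ->
  imcw (csub S R0) (csub P R0) * imcw (csub S R0) (csub Q R0) < 0 ->
  segments_intersect P Q R0 S.
Proof.
  destruct P as [xP yP], Q as [xQ yQ], R0 as [xR yR], S as [xS yS].
  unfold segments_intersect, imcw, csub, cadd, cscale; simpl.
  set (al := (xQ - xP) * (yR - yP) - (yQ - yP) * (xR - xP)).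
  set (be := (xQ - xP) * (yS - yP) - (yQ - yP) * (xS - xP)).
  set (ga := (xS - xR) * (yP - yR) - (yS - yR) * (xP - xR)).
  set (ep := (xS - xR) * (yQ - yR) - (yS - yR) * (xQ - xR)).
  intros H1 H2.
  exists (ga/(ga-ep)), (al/(al-be)).
  split; [apply frac_bounds; auto|]. split; [apply frac_bounds; auto|].
  assert (ga - ep <> 0) by (intro; nra).
  assert (al - be <> 0) by (intro; nra).
  unfold al, be, ga, ep in *.
  f_equal; field; auto.
Qed.

Lemma sgn_lemma al be t : 0<=t<=1 -> al<>0 -> be<>0 -> (1-t)*al+t*be=0 -> al*be<0.
Proof.
  intros [H0 H1] Ha Hb E.
  destruct (Rtotal_order t 0) as [Ht|[Ht|Ht]]; [lra| subst; lra |].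
  destruct (Rtotal_order t 1) as [Ht1|[Ht1|Ht1]]; [| subst; lra | lra].
  assert (E2 : (1-t)*(al*be) = - (t * (be*be))).
  { replace ((1-t)*(al*be)) with (((1-t)*al)*be) by ring. replace ((1-t)*al) with (-(t*be)) by lra. ring. }
  assert (0 < be*be) by (destruct (Rtotal_order be 0) as [h|[h|h]]; nra).
  nra.
Qed.

Lemma sep_gen (P Q R0 S : Cpt) :
  imcw (csub Q P) (csub R0 P) <> 0 -> imcw (csub Q P) (csub S P) <> 0 ->
  imcw (csub S R0) (csub P R0) <> 0 -> imcw (csub S R0) (csub Q R0) <> 0 ->
  segments_intersect P Q R0 S ->
  imcw (csub Q P) (csub R0 P) * imcw (csub Q P) (csub S P) < 0 /\
  imcw (csub S R0) (csub P R0) * imcw (csub S R0) (csub Q R0) < 0.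
Proof.
  destruct P as [xP yP], Q as [xQ yQ], R0 as [xR yR], S as [xS yS].
  unfold segments_intersect, imcw, csub, cadd, cscale; simpl.
  intros H1 H2 H3 H4 [s [t [Hs [Ht E]]]].
  injection E as e1 e2.
  split.
  - apply (sgn_lemma _ _ t); auto.
    transitivity ((xQ - xP) * ((yR + t * (yS - yR)) - yP) - (yQ - yP) * ((xR + t * (xS - xR)) - xP)); [ring|].
    rewrite <- e1, <- e2. ring.
  - apply (sgn_lemma _ _ s); auto.
    transitivity ((xS - xR) * ((yP + s * (yQ - yP)) - yR) - (yS - yR) * ((xP + s * (xQ - xP)) - xR)); [ring|].
    rewrite e1, e2. ring.
Qed.

Definition pp1 A B C D := imcw (z1 A B C D) (z2 A B C D).
Definition pp2 A B C D := imcw (z2 A B C D) (z3 A B C D).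
Definition pp3 A B C D := imcw (z3 A B C D) (z4 A B C D).
Definition pp4 A B C D := imcw (z4 A B C D) (z1 A B C D).

Lemma quad_facts (A B C D : Cpt) :
  imcw (csub B A) (csub C A) = pp1 A B C D /\
  imcw (csub B A) (csub D A) = pp4 A B C D /\
  imcw (csub D C) (csub A C) = pp3 A B C D /\
  imcw (csub D C) (csub B C) = pp2 A B C D /\
  imcw (csub C B) (csub D B) = pp2 A B C D /\
  imcw (csub C B) (csub A B) = pp1 A B C D /\
  imcw (csub A D) (csub B D) = pp4 A B C D /\
  imcw (csub A D) (csub C D) = pp3 A B C D /\
  pp1 A B C D + pp3 A B C D = pp2 A B C D + pp4 A B C D.
Proof.
  destruct A, B, C, D; unfold pp1, pp2, pp3, pp4, z1, z2, z3, z4, imcw, csub; simpl.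
  repeat split; ring.
Qed.

Lemma inter1 A B C D : pp1 A B C D * pp4 A B C D < 0 -> pp2 A B C D * pp3 A B C D < 0 ->
  segments_intersect A B C D.
Proof.
  destruct (quad_facts A B C D) as (f1&f2&f3&f4&f5&f6&f7&f8&f9).
  intros. apply inter_gen; rewrite ?f1, ?f2, ?f3, ?f4; lra.
Qed.

Lemma inter2 A B C D : pp1 A B C D * pp2 A B C D < 0 -> pp3 A B C D * pp4 A B C D < 0 ->
  segments_intersect B C D A.
Proof.
  destruct (quad_facts A B C D) as (f1&f2&f3&f4&f5&f6&f7&f8&f9).
  intros. apply inter_gen; rewrite ?f5, ?f6, ?f7, ?f8; lra.
Qed.

Lemma sep_quad A B C D : pp1 A B C D <> 0 -> pp2 A B C D <> 0 -> pp3 A B C D <> 0 -> pp4 A B C D <> 0 ->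
  segments_intersect A B C D \/ segments_intersect B C D A ->
  (pp1 A B C D * pp4 A B C D < 0 /\ pp2 A B C D * pp3 A B C D < 0) \/
  (pp1 A B C D * pp2 A B C D < 0 /\ pp3 A B C D * pp4 A B C D < 0).
Proof.
  destruct (quad_facts A B C D) as (f1&f2&f3&f4&f5&f6&f7&f8&f9).
  intros h1 h2 h3 h4 [H|H].
  - left. pose proof (sep_gen A B C D) as G. rewrite f1, f2, f3, f4 in G.
    destruct (G h1 h4 h3 h2 H). split; lra.
  - right. pose proof (sep_gen B C D A) as G. rewrite f5, f6, f7, f8 in G.
    destruct (G h2 h1 h4 h3 H). split; lra.
Qed.
Lemma sos10 (e1 e2 e3 e4 f1 f2 f3 f4 f5 f6 : R) :
  e1*e1+e2*e2+e3*e3+e4*e4+2*(f1*f1+f2*f2+f3*f3+f4*f4+f5*f5+f6*f6) = 0 ->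
  f1=0/\f2=0/\f3=0/\f4=0/\f5=0/\f6=0.
Proof.
  intros H.
  pose proof (Rle_0_sqr e1); pose proof (Rle_0_sqr e2); pose proof (Rle_0_sqr e3); pose proof (Rle_0_sqr e4);
  pose proof (Rle_0_sqr f1); pose proof (Rle_0_sqr f2); pose proof (Rle_0_sqr f3); pose proof (Rle_0_sqr f4);
  pose proof (Rle_0_sqr f5); pose proof (Rle_0_sqr f6). unfold Rsqr in *.
  repeat split; match goal with |- ?f = 0 => assert (Hf : f*f = 0) by lra; destruct (Rmult_integral _ _ Hf); auto end.
Qed.
Lemma sos6 (f1 f2 f3 f4 f5 f6 : R) :
  f1*f1+f2*f2+f3*f3+f4*f4+f5*f5+f6*f6 = 0 ->
  f1=0/\f2=0/\f3=0/\f4=0/\f5=0/\f6=0.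
Proof.
  intros H.
  pose proof (Rle_0_sqr f1); pose proof (Rle_0_sqr f2); pose proof (Rle_0_sqr f3); pose proof (Rle_0_sqr f4);
  pose proof (Rle_0_sqr f5); pose proof (Rle_0_sqr f6). unfold Rsqr in *.
  repeat split; match goal with |- ?f = 0 => assert (Hf : f*f = 0) by lra; destruct (Rmult_integral _ _ Hf); auto end.
Qed.


Definition det3 (a b c d e f g h i : R) := a*(e*i - f*h) - b*(d*i - f*g) + c*(d*h - e*g).
Definition det4 (m11 m12 m13 m14 m21 m22 m23 m24 m31 m32 m33 m34 m41 m42 m43 m44 : R) :=
  m11 * det3 m22 m23 m24 m32 m33 m34 m42 m43 m44
 - m12 * det3 m21 m23 m24 m31 m33 m34 m41 m43 m44
 + m13 * det3 m21 m22 m24 m31 m32 m34 m41 m42 m44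
 - m14 * det3 m21 m22 m23 m31 m32 m33 m41 m42 m43.

Definition delta (a1 a2 a3 a4 b1 b2 b3 b4 c1 c2 c3 c4 d1 d2 d3 d4 : R) := (a1*b2 - a2*b1)*(c3*d4 - c4*d3) - (a1*b3 - a3*b1)*(c2*d4 - c4*d2) + (a1*b4 - a4*b1)*(c2*d3 - c3*d2) + (a2*b3 - a3*b2)*(c1*d4 - c4*d1) - (a2*b4 - a4*b2)*(c1*d3 - c3*d1) + (a3*b4 - a4*b3)*(c1*d2 - c2*d1).

Lemma rows (a1 a2 a3 a4 b1 b2 b3 b4 c1 c2 c3 c4 d1 d2 d3 d4 : R) : (dot4 a1 a2 a3 a4 a1 a2 a3 a4) = 1 -> (dot4 b1 b2 b3 b4 b1 b2 b3 b4) = 1 -> (dot4 a1 a2 a3 a4 b1 b2 b3 b4) = 0 -> (dot4 c1 c2 c3 c4 c1 c2 c3 c4) = 1 -> (dot4 d1 d2 d3 d4 d1 d2 d3 d4) = 1 -> (dot4 c1 c2 c3 c4 d1 d2 d3 d4) = 0 -> (dot4 c1 c2 c3 c4 a1 a2 a3 a4) = 0 -> (dot4 c1 c2 c3 c4 b1 b2 b3 b4) = 0 -> (dot4 d1 d2 d3 d4 a1 a2 a3 a4) = 0 -> (dot4 d1 d2 d3 d4 b1 b2 b3 b4) = 0 ->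
  (a1*a2 + b1*b2 + c1*c2 + d1*d2) = 0 /\ (a1*a3 + b1*b3 + c1*c3 + d1*d3) = 0 /\ (a1*a4 + b1*b4 + c1*c4 + d1*d4) = 0 /\ (a2*a3 + b2*b3 + c2*c3 + d2*d3) = 0 /\ (a2*a4 + b2*b4 + c2*c4 + d2*d4) = 0 /\ (a3*a4 + b3*b4 + c3*c4 + d3*d4) = 0.
Proof.
  intros Haa Hbb Hab Hcc Hdd Hcd Hca Hcb Hda Hdb.
  assert (E : (1 - (a1*a1 + b1*b1 + c1*c1 + d1*d1))*(1 - (a1*a1 + b1*b1 + c1*c1 + d1*d1)) + (1 - (a2*a2 + b2*b2 + c2*c2 + d2*d2))*(1 - (a2*a2 + b2*b2 + c2*c2 + d2*d2)) + (1 - (a3*a3 + b3*b3 + c3*c3 + d3*d3))*(1 - (a3*a3 + b3*b3 + c3*c3 + d3*d3)) + (1 - (a4*a4 + b4*b4 + c4*c4 + d4*d4))*(1 - (a4*a4 + b4*b4 + c4*c4 + d4*d4)) + 2*((a1*a2 + b1*b2 + c1*c2 + d1*d2)*(a1*a2 + b1*b2 + c1*c2 + d1*d2) + (a1*a3 + b1*b3 + c1*c3 + d1*d3)*(a1*a3 + b1*b3 + c1*c3 + d1*d3) + (a1*a4 + b1*b4 + c1*c4 + d1*d4)*(a1*a4 + b1*b4 + c1*c4 + d1*d4) + (a2*a3 + b2*b3 + c2*c3 + d2*d3)*(a2*a3 + b2*b3 + c2*c3 + d2*d3) + (a2*a4 + b2*b4 + c2*c4 + d2*d4)*(a2*a4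 + b2*b4 + c2*c4 + d2*d4) + (a3*a4 + b3*b4 + c3*c4 + d3*d4)*(a3*a4 + b3*b4 + c3*c4 + d3*d4)) = 4 - 2*((dot4 a1 a2 a3 a4 a1 a2 a3 a4)+(dot4 b1 b2 b3 b4 b1 b2 b3 b4)+(dot4 c1 c2 c3 c4 c1 c2 c3 c4)+(dot4 d1 d2 d3 d4 d1 d2 d3 d4)) + ((dot4 a1 a2 a3 a4 a1 a2 a3 a4)*(dot4 a1 a2 a3 a4 a1 a2 a3 a4)+(dot4 b1 b2 b3 b4 b1 b2 b3 b4)*(dot4 b1 b2 b3 b4 b1 b2 b3 b4)+(dot4 c1 c2 c3 c4 c1 c2 c3 c4)*(dot4 c1 c2 c3 c4 c1 c2 c3 c4)+(dot4 d1 d2 d3 d4 d1 d2 d3 d4)*(dot4 d1 d2 d3 d4 d1 d2 d3 d4)) + 2*((dot4 a1 a2 a3 a4 b1 b2 b3 b4)*(dot4 a1 a2 a3 a4 b1 b2 b3 b4) + (dot4 c1 c2 c3 c4 a1 a2 a3 a4)*(dot4 c1 c2 c3 c4 a1 a2 a3 a4) + (dot4 d1 d2 d3 d4 a1 a2 a3 a4)*(dot4 d1 d2 d3 d4 a1 a2 a3 a4) + (dot4 c1 c2 c3 c4 b1 b2 b3 b4)*(dot4 c1 c2 c3 c4 b1 b2 b3 b4) + (dot4 d1 d2 d3 d4 b1 b2 b3 b4)*(dot4 d1 d2 d3 d4 b1 b2 b3 b4) + (dot4 c1 c2 c3 c4 d1 d2 d3 d4)*(dot4 c1 c2 c3 c4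 d1 d2 d3 d4))) by (unfold dot4; ring).
  rewrite Haa, Hbb, Hab, Hcc, Hdd, Hcd, Hca, Hcb, Hda, Hdb in E.
  apply (sos10 (1 - (a1*a1 + b1*b1 + c1*c1 + d1*d1)) (1 - (a2*a2 + b2*b2 + c2*c2 + d2*d2)) (1 - (a3*a3 + b3*b3 + c3*c3 + d3*d3)) (1 - (a4*a4 + b4*b4 + c4*c4 + d4*d4))). rewrite E. ring.
Qed.

Lemma delta_sq (a1 a2 a3 a4 b1 b2 b3 b4 c1 c2 c3 c4 d1 d2 d3 d4 : R) : (dot4 a1 a2 a3 a4 a1 a2 a3 a4) = 1 -> (dot4 b1 b2 b3 b4 b1 b2 b3 b4) = 1 -> (dot4 a1 a2 a3 a4 b1 b2 b3 b4) = 0 -> (dot4 c1 c2 c3 c4 c1 c2 c3 c4) = 1 -> (dot4 d1 d2 d3 d4 d1 d2 d3 d4) = 1 -> (dot4 c1 c2 c3 c4 d1 d2 d3 d4) = 0 -> (dot4 c1 c2 c3 c4 a1 a2 a3 a4) = 0 -> (dot4 c1 c2 c3 c4 b1 b2 b3 b4) = 0 -> (dot4 d1 d2 d3 d4 a1 a2 a3 a4) = 0 -> (dot4 d1 d2 d3 d4 b1 b2 b3 b4) = 0 ->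
  (delta a1 a2 a3 a4 b1 b2 b3 b4 c1 c2 c3 c4 d1 d2 d3 d4) * (delta a1 a2 a3 a4 b1 b2 b3 b4 c1 c2 c3 c4 d1 d2 d3 d4) = 1.
Proof.
  intros Haa Hbb Hab Hcc Hdd Hcd Hca Hcb Hda Hdb.
  assert (E : (delta a1 a2 a3 a4 b1 b2 b3 b4 c1 c2 c3 c4 d1 d2 d3 d4) * (delta a1 a2 a3 a4 b1 b2 b3 b4 c1 c2 c3 c4 d1 d2 d3 d4) = det4 (dot4 a1 a2 a3 a4 a1 a2 a3 a4) (dot4 a1 a2 a3 a4 b1 b2 b3 b4) (dot4 c1 c2 c3 c4 a1 a2 a3 a4) (dot4 d1 d2 d3 d4 a1 a2 a3 a4) (dot4 a1 a2 a3 a4 b1 b2 b3 b4) (dot4 b1 b2 b3 b4 b1 b2 b3 b4) (dot4 c1 c2 c3 c4 b1 b2 b3 b4) (dot4 d1 d2 d3 d4 b1 b2 b3 b4) (dot4 c1 c2 c3 c4 a1 a2 a3 a4) (dot4 c1 c2 c3 c4 b1 b2 b3 b4) (dot4 c1 c2 c3 c4 c1 c2 c3 c4) (dot4 c1 c2 c3 c4 d1 d2 d3 d4) (dot4 d1 d2 d3 d4 a1 a2 a3 a4) (dot4 d1 d2 d3 d4 b1 b2 b3 b4) (dot4 c1 c2 c3 c4 d1 d2 d3 d4) (dot4 d1 d2 d3 d4 d1 d2 d3 d4)) by (unfold delta, det4, det3, dot4; ring).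
  rewrite Haa, Hbb, Hab, Hcc, Hdd, Hcd, Hca, Hcb, Hda, Hdb in E. rewrite E. unfold det4, det3. ring.
Qed.

Lemma hodge (a1 a2 a3 a4 b1 b2 b3 b4 c1 c2 c3 c4 d1 d2 d3 d4 : R) : (dot4 a1 a2 a3 a4 a1 a2 a3 a4) = 1 -> (dot4 b1 b2 b3 b4 b1 b2 b3 b4) = 1 -> (dot4 a1 a2 a3 a4 b1 b2 b3 b4) = 0 -> (dot4 c1 c2 c3 c4 c1 c2 c3 c4) = 1 -> (dot4 d1 d2 d3 d4 d1 d2 d3 d4) = 1 -> (dot4 c1 c2 c3 c4 d1 d2 d3 d4) = 0 -> (dot4 c1 c2 c3 c4 a1 a2 a3 a4) = 0 -> (dot4 c1 c2 c3 c4 b1 b2 b3 b4) = 0 -> (dot4 d1 d2 d3 d4 a1 a2 a3 a4) = 0 -> (dot4 d1 d2 d3 d4 b1 b2 b3 b4) = 0 ->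
  (c1*d2 - c2*d1) - (delta a1 a2 a3 a4 b1 b2 b3 b4 c1 c2 c3 c4 d1 d2 d3 d4)*(a3*b4 - a4*b3) = 0 /\ (c3*d4 - c4*d3) - (delta a1 a2 a3 a4 b1 b2 b3 b4 c1 c2 c3 c4 d1 d2 d3 d4)*(a1*b2 - a2*b1) = 0 /\ (c2*d3 - c3*d2) - (delta a1 a2 a3 a4 b1 b2 b3 b4 c1 c2 c3 c4 d1 d2 d3 d4)*(a1*b4 - a4*b1) = 0 /\ (c1*d4 - c4*d1) - (delta a1 a2 a3 a4 b1 b2 b3 b4 c1 c2 c3 c4 d1 d2 d3 d4)*(a2*b3 - a3*b2) = 0 /\ (c1*d3 - c3*d1) + (delta a1 a2 a3 a4 b1 b2 b3 b4 c1 c2 c3 c4 d1 d2 d3 d4)*(a2*b4 - a4*b2) = 0 /\ (c2*d4 - c4*d2) + (delta a1 a2 a3 a4 b1 b2 b3 b4 c1 c2 c3 c4 d1 d2 d3 d4)*(a1*b3 - a3*b1) = 0.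
Proof.
  intros Haa Hbb Hab Hcc Hdd Hcd Hca Hcb Hda Hdb.
  pose proof (delta_sq a1 a2 a3 a4 b1 b2 b3 b4 c1 c2 c3 c4 d1 d2 d3 d4 Haa Hbb Hab Hcc Hdd Hcd Hca Hcb Hda Hdb) as Hd.
  assert (E : ((c1*d2 - c2*d1) - (delta a1 a2 a3 a4 b1 b2 b3 b4 c1 c2 c3 c4 d1 d2 d3 d4)*(a3*b4 - a4*b3))*((c1*d2 - c2*d1) - (delta a1 a2 a3 a4 b1 b2 b3 b4 c1 c2 c3 c4 d1 d2 d3 d4)*(a3*b4 - a4*b3)) + ((c3*d4 - c4*d3) - (delta a1 a2 a3 a4 b1 b2 b3 b4 c1 c2 c3 c4 d1 d2 d3 d4)*(a1*b2 - a2*b1))*((c3*d4 - c4*d3) - (delta a1 a2 a3 a4 b1 b2 b3 b4 c1 c2 c3 c4 d1 d2 d3 d4)*(a1*b2 - a2*b1)) + ((c2*d3 - c3*d2) - (delta a1 a2 a3 a4 b1 b2 b3 b4 c1 c2 c3 c4 d1 d2 d3 d4)*(a1*b4 - a4*b1))*((c2*d3 - c3*d2) - (delta a1 a2 a3 a4 b1 b2 b3 b4 c1 c2 c3 c4 d1 d2 d3 d4)*(a1*b4 - a4*b1)) + ((c1*d4 - c4*d1) - (delta a1 a2 a3 a4 b1 b2 b3 b4 c1 c2 c3 c4 d1 d2 d3 d4)*(a2*b3 - a3*b2))*((c1*d4 - c4*d1) - (delta a1 a2 a3 a4 b1 b2 b3 b4 c1 c2 c3 c4 d1 d2 d3 d4)*(a2*b3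 - a3*b2)) + ((c1*d3 - c3*d1) + (delta a1 a2 a3 a4 b1 b2 b3 b4 c1 c2 c3 c4 d1 d2 d3 d4)*(a2*b4 - a4*b2))*((c1*d3 - c3*d1) + (delta a1 a2 a3 a4 b1 b2 b3 b4 c1 c2 c3 c4 d1 d2 d3 d4)*(a2*b4 - a4*b2)) + ((c2*d4 - c4*d2) + (delta a1 a2 a3 a4 b1 b2 b3 b4 c1 c2 c3 c4 d1 d2 d3 d4)*(a1*b3 - a3*b1))*((c2*d4 - c4*d2) + (delta a1 a2 a3 a4 b1 b2 b3 b4 c1 c2 c3 c4 d1 d2 d3 d4)*(a1*b3 - a3*b1)) = ((dot4 c1 c2 c3 c4 c1 c2 c3 c4)*(dot4 d1 d2 d3 d4 d1 d2 d3 d4) - (dot4 c1 c2 c3 c4 d1 d2 d3 d4)*(dot4 c1 c2 c3 c4 d1 d2 d3 d4)) - 2*((delta a1 a2 a3 a4 b1 b2 b3 b4 c1 c2 c3 c4 d1 d2 d3 d4)*(delta a1 a2 a3 a4 b1 b2 b3 b4 c1 c2 c3 c4 d1 d2 d3 d4)) + (delta a1 a2 a3 a4 b1 b2 b3 b4 c1 c2 c3 c4 d1 d2 d3 d4)*(delta a1 a2 a3 a4 b1 b2 b3 b4 c1 c2 c3 c4 d1 d2 d3 d4)*((dot4 a1 a2 a3 a4 a1 a2 a3 a4)*(dot4 b1 b2 b3 b4 b1 b2 b3 b4) - (dot4 a1 a2 a3 a4 b1 b2 b3 b4)*(dot4 a1 a2 a3 a4 b1 b2 b3 b4))) by (unfold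 delta, dot4; ring).
  rewrite Hcc, Hdd, Hcd, Haa, Hbb, Hab, Hd in E.
  apply sos6. rewrite E. ring.
Qed.
Lemma nz_parts r i : 2*r*i <> 0 -> r <> 0 /\ i <> 0.
Proof. intros H; split; intro; subst; apply H; ring. Qed.

Lemma tr_pos rj rk ij ik : 0 < rj*rk -> 0 < (2*rj*ij)*(2*rk*ik) -> 0 < ij*ik.
Proof. intros H H0. replace ((2*rj*ij)*(2*rk*ik)) with ((4*(rj*rk))*(ij*ik)) in H0 by ring. nra. Qed.
Lemma tr_neg rj rk ij ik : 0 < rj*rk -> (2*rj*ij)*(2*rk*ik) < 0 -> ij*ik < 0.
Proof. intros H H0. replace ((2*rj*ij)*(2*rk*ik)) with ((4*(rj*rk))*(ij*ik)) in H0 by ring. nra. Qed.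
Lemma tr_pos' rj rk ij ik : rj*rk < 0 -> (2*rj*ij)*(2*rk*ik) < 0 -> 0 < ij*ik.
Proof. intros H H0. replace ((2*rj*ij)*(2*rk*ik)) with ((4*(rj*rk))*(ij*ik)) in H0 by ring. nra. Qed.
Lemma tr_neg' rj rk ij ik : rj*rk < 0 -> 0 < (2*rj*ij)*(2*rk*ik) -> ij*ik < 0.
Proof. intros H H0. replace ((2*rj*ij)*(2*rk*ik)) with ((4*(rj*rk))*(ij*ik)) in H0 by ring. nra. Qed.

Lemma neg_cases x y : x*y < 0 -> (0 < x /\ y < 0) \/ (x < 0 /\ 0 < y).
Proof.
  intros H. destruct (Rtotal_order x 0) as [h|[h|h]].
  - right. split; auto. nra.
  - subst. lra.
  - left. split; auto. nra.
Qed.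

Lemma pat1 p1 p2 p3 p4 : p1+p3 = p2+p4 -> p1*p4 < 0 -> p2*p3 < 0 ->
  0 < p1*p2 /\ 0 < p3*p4 /\ p1*p3 < 0.
Proof.
  intros E H1 H2. destruct (neg_cases _ _ H1) as [[? ?]|[? ?]];
  destruct (neg_cases _ _ H2) as [[? ?]|[? ?]]; try lra; repeat split; nra.
Qed.

Lemma pat2 p1 p2 p3 p4 : p1+p3 = p2+p4 -> p1*p2 < 0 -> p3*p4 < 0 ->
  0 < p1*p4 /\ 0 < p2*p3 /\ p1*p3 < 0.
Proof.
  intros E H1 H2. destruct (neg_cases _ _ H1) as [[? ?]|[? ?]];
  destruct (neg_cases _ _ H2) as [[? ?]|[? ?]]; try lra; repeat split; nra.
Qed.

Lemma contra xr xi yr yi : 0 < xi*yi -> xr*yi + xi*yr = 0 -> 0 <= xr*yr - xi*yi -> False.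
Proof.
  intros H E G.
  assert (E2 : (xr*yr - xi*yi)*(xi*yi) = -((xi*xi)*(yr*yr+yi*yi))).
  { replace ((xr*yr - xi*yi)*(xi*yi)) with ((xr*yi)*(yr*xi) - (xi*xi)*(yi*yi)) by ring.
    replace (xr*yi) with (-(xi*yr)) by lra. ring. }
  assert (0 < xi*xi) by (destruct (Rtotal_order xi 0) as [h|[h|h]]; [nra|subst; lra|nra]).
  assert (0 < yi*yi) by (destruct (Rtotal_order yi 0) as [h|[h|h]]; [nra|subst; lra|nra]).
  assert (0 <= (xr*yr - xi*yi)*(xi*yi)) by (apply Rmult_le_pos; lra).
  assert (0 < (xi*xi)*(yr*yr+yi*yi)).
  { apply Rmult_lt_0_compat; auto. pose proof (Rle_0_sqr yr). unfold Rsqr in *. lra. }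
  lra.
Qed.

Lemma sq_pos x : x <> 0 -> 0 < x*x.
Proof. intros. destruct (Rtotal_order x 0) as [h|[h|h]]; [nra|contradiction|nra]. Qed.

Lemma ext k z : 0 < k -> 0 < k*z -> 0 < z.
Proof. intros. nra. Qed.
Lemma mulpn x y : 0 < x -> y < 0 -> x*y < 0.
Proof. intros. nra. Qed.
Lemma mulnn x y : x < 0 -> y < 0 -> 0 < x*y.
Proof. intros. nra. Qed.
Lemma neg4 k z : 0 < k -> 0 < z -> -(4*k)*z*1 < 0.
Proof. intros. nra. Qed.

Lemma signs (R1 R2 R3 R4 I1 I2 I3 I4 del : R) :
  0<R1 -> 0<R2 -> 0<R3 ->
  2*R1*I1<>0 -> 2*R2*I2<>0 -> 2*R3*I3<>0 -> 2*R4*I4<>0 ->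
  2*R1*I1 + 2*R3*I3 = 2*R2*I2 + 2*R4*I4 ->
  ((2*R1*I1)*(2*R4*I4)<0 /\ (2*R2*I2)*(2*R3*I3)<0) \/
  ((2*R1*I1)*(2*R2*I2)<0 /\ (2*R3*I3)*(2*R4*I4)<0) ->
  (R1*R2 - I1*I2)*(R3*I4 + I3*R4) + (R1*I2 + I1*R2)*(R3*R4 - I3*I4) = 0 ->
  0 <= (R1*R2 - I1*I2)*(R3*R4 - I3*I4) - (R1*I2+I1*R2)*(R3*I4+I3*R4) ->
  (R1*R4 - I1*I4)*(R2*I3 + I2*R3) + (R1*I4 + I1*R4)*(R2*R3 - I2*I3) = 0 ->
  0 <= (R1*R4 - I1*I4)*(R2*R3 - I2*I3) - (R1*I4+I1*R4)*(R2*I3+I2*R3) ->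
  del*del = 1 ->
  2*(-R1)*(del*I3) <> 0 /\ 2*(-R2)*(-(del*I4)) <> 0 /\
  2*(-R3)*(del*I1) <> 0 /\ 2*(-R4)*(-(del*I2)) <> 0 /\
  (((2*(-R1)*(del*I3))*(2*(-R4)*(-(del*I2))) < 0 /\ (2*(-R2)*(-(del*I4)))*(2*(-R3)*(del*I1)) < 0) \/
   ((2*(-R1)*(del*I3))*(2*(-R2)*(-(del*I4))) < 0 /\ (2*(-R3)*(del*I1))*(2*(-R4)*(-(del*I2))) < 0)).
Proof.
  intros h1 h2 h3 n1 n2 n3 n4 E Hp X1 Y1 X2 Y2 Hd.
  destruct (nz_parts _ _ n1) as [r1 i1]. destruct (nz_parts _ _ n2) as [r2 i2].
  destruct (nz_parts _ _ n3) as [r3 i3]. destruct (nz_parts _ _ n4) as [r4 i4].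
  pose proof (sq_pos _ i1) as s1.
  assert (HR4 : 0 < R4).
  { destruct (Rlt_or_le 0 R4) as [h|h]; auto.
    assert (h4 : R4 < 0) by (destruct h; auto; contradiction). exfalso.
    destruct Hp as [[q14 q23]|[q12 q34]].
    - destruct (pat1 _ _ _ _ E q14 q23) as (q12 & q34 & q13).
      assert (j12 : 0 < I1*I2) by (apply (tr_pos R1 R2); auto; apply Rmult_lt_0_compat; auto).
      assert (j13 : I1*I3 < 0) by (apply (tr_neg R1 R3); auto; apply Rmult_lt_0_compat; auto).
      assert (j14 : 0 < I1*I4) by (apply (tr_pos' R1 R4); auto; apply mulpn; auto).
      assert (k1 : 0 < I1*(R1*I2+I1*R2)).
      { replace (I1*(R1*I2+I1*R2)) with (R1*(I1*I2) + R2*(I1*I1)) by ring.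
        pose proof (Rmult_lt_0_compat _ _ h1 j12). pose proof (Rmult_lt_0_compat _ _ h2 s1). lra. }
      assert (k2 : 0 < I1*(R3*I4+I3*R4)).
      { replace (I1*(R3*I4+I3*R4)) with (R3*(I1*I4) + (I1*I3)*R4) by ring.
        pose proof (Rmult_lt_0_compat _ _ h3 j14). pose proof (mulnn _ _ j13 h4). lra. }
      assert (k3 : 0 < (R1*I2+I1*R2)*(R3*I4+I3*R4)).
      { assert (0 < (I1*I1)*((R1*I2+I1*R2)*(R3*I4+I3*R4))).
        { replace ((I1*I1)*((R1*I2+I1*R2)*(R3*I4+I3*R4))) with
            ((I1*(R1*I2+I1*R2))*(I1*(R3*I4+I3*R4))) by ring. apply Rmult_lt_0_compat; auto. }
        exact (ext _ _ s1 H). }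
      exact (contra _ _ _ _ k3 X1 Y1).
    - destruct (pat2 _ _ _ _ E q12 q34) as (q14 & q23 & q13).
      assert (j12 : I1*I2 < 0) by (apply (tr_neg R1 R2); auto; apply Rmult_lt_0_compat; auto).
      assert (j13 : I1*I3 < 0) by (apply (tr_neg R1 R3); auto; apply Rmult_lt_0_compat; auto).
      assert (j14 : I1*I4 < 0) by (apply (tr_neg' R1 R4); auto; apply mulpn; auto).
      assert (k1 : I1*(R1*I4+I1*R4) < 0).
      { replace (I1*(R1*I4+I1*R4)) with (R1*(I1*I4) + (I1*I1)*R4) by ring.
        pose proof (mulpn _ _ h1 j14). pose proof (mulpn _ _ s1 h4). lra. }
      assert (k2 : I1*(R2*I3+I2*R3) < 0).
      { replace (I1*(R2*I3+I2*R3)) with (R2*(I1*I3) + (I1*I2)*R3) by ring.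
        pose proof (mulpn _ _ h2 j13). pose proof (mulpn _ _ h3 j12). lra. }
      assert (k3 : 0 < (R1*I4+I1*R4)*(R2*I3+I2*R3)).
      { assert (0 < (I1*I1)*((R1*I4+I1*R4)*(R2*I3+I2*R3))).
        { replace ((I1*I1)*((R1*I4+I1*R4)*(R2*I3+I2*R3))) with
            ((-(I1*(R1*I4+I1*R4)))*(-(I1*(R2*I3+I2*R3)))) by ring. apply Rmult_lt_0_compat; lra. }
        exact (ext _ _ s1 H). }
      exact (contra _ _ _ _ k3 X2 Y2). }
  assert (hd : del <> 0) by (intro; subst; lra).
  assert (nz : forall x y, x <> 0 -> y <> 0 -> x*y <> 0) by (intros; apply Rmult_integral_contrapositive_currified; auto).
  assert (no : forall x, x <> 0 -> -x <> 0) by (intros; lra).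
  split; [apply nz; [apply nz; [lra|apply no; lra]|apply nz; auto]|].
  split; [apply nz; [apply nz; [lra|apply no; lra]|apply no; apply nz; auto]|].
  split; [apply nz; [apply nz; [lra|apply no; lra]|apply nz; auto]|].
  split; [apply nz; [apply nz; [lra|apply no; lra]|apply no; apply nz; auto]|].
  destruct Hp as [[q14 q23]|[q12 q34]].
  - destruct (pat1 _ _ _ _ E q14 q23) as (q12 & q34 & q13).
    right.
    assert (j34 : 0 < I3*I4) by (apply (tr_pos R3 R4); auto; apply Rmult_lt_0_compat; auto).
    assert (j12 : 0 < I1*I2) by (apply (tr_pos R1 R2); auto; apply Rmult_lt_0_compat; auto).
    split.
    + replace ((2*(-R1)*(del*I3))*(2*(-R2)*(-(del*I4)))) with (-(4*(R1*R2))*(I3*I4)*(del*del)) by ring.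
      rewrite Hd. apply neg4; auto; apply Rmult_lt_0_compat; auto.
    + replace ((2*(-R3)*(del*I1))*(2*(-R4)*(-(del*I2)))) with (-(4*(R3*R4))*(I1*I2)*(del*del)) by ring.
      rewrite Hd. apply neg4; auto; apply Rmult_lt_0_compat; auto.
  - destruct (pat2 _ _ _ _ E q12 q34) as (q14 & q23 & q13).
    left.
    assert (j23 : 0 < I2*I3) by (apply (tr_pos R2 R3); auto; apply Rmult_lt_0_compat; auto).
    assert (j14 : 0 < I1*I4) by (apply (tr_pos R1 R4); auto; apply Rmult_lt_0_compat; auto).
    split.
    + replace ((2*(-R1)*(del*I3))*(2*(-R4)*(-(del*I2)))) with (-(4*(R1*R4))*(I2*I3)*(del*del)) by ring.
      rewrite Hd. apply neg4; auto; apply Rmult_lt_0_compat; auto.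
    + replace ((2*(-R2)*(-(del*I4)))*(2*(-R3)*(del*I1))) with (-(4*(R2*R3))*(I1*I4)*(del*del)) by ring.
      rewrite Hd. apply neg4; auto; apply Rmult_lt_0_compat; auto.
Qed.
Lemma core (a1 a2 a3 a4 b1 b2 b3 b4 c1 c2 c3 c4 d1 d2 d3 d4 : R) :
  dot4 a1 a2 a3 a4 a1 a2 a3 a4 = 1 -> dot4 b1 b2 b3 b4 b1 b2 b3 b4 = 1 -> dot4 a1 a2 a3 a4 b1 b2 b3 b4 = 0 ->
  dot4 c1 c2 c3 c4 c1 c2 c3 c4 = 1 -> dot4 d1 d2 d3 d4 d1 d2 d3 d4 = 1 -> dot4 c1 c2 c3 c4 d1 d2 d3 d4 = 0 ->
  dot4 c1 c2 c3 c4 a1 a2 a3 a4 = 0 -> dot4 c1 c2 c3 c4 b1 b2 b3 b4 = 0 ->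
  dot4 d1 d2 d3 d4 a1 a2 a3 a4 = 0 -> dot4 d1 d2 d3 d4 b1 b2 b3 b4 = 0 ->
  0 < (a1*a2 + b1*b2) -> 0 < (a2*a3 + b2*b3) -> 0 < (a3*a4 + b3*b4) ->
  (2*(a1*a2 + b1*b2)*(a1*b2 - b1*a2)) <> 0 -> (2*(a2*a3 + b2*b3)*(a2*b3 - b2*a3)) <> 0 -> (2*(a3*a4 + b3*b4)*(a3*b4 - b3*a4)) <> 0 -> (2*(a4*a1 + b4*b1)*(a4*b1 - b4*a1)) <> 0 ->
  (2*(a1*a2 + b1*b2)*(a1*b2 - b1*a2)) + (2*(a3*a4 + b3*b4)*(a3*b4 - b3*a4)) = (2*(a2*a3 + b2*b3)*(a2*b3 - b2*a3)) + (2*(a4*a1 + b4*b1)*(a4*b1 - b4*a1)) ->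
  ((2*(a1*a2 + b1*b2)*(a1*b2 - b1*a2)) * (2*(a4*a1 + b4*b1)*(a4*b1 - b4*a1)) < 0 /\ (2*(a2*a3 + b2*b3)*(a2*b3 - b2*a3)) * (2*(a3*a4 + b3*b4)*(a3*b4 - b3*a4)) < 0) \/ ((2*(a1*a2 + b1*b2)*(a1*b2 - b1*a2)) * (2*(a2*a3 + b2*b3)*(a2*b3 - b2*a3)) < 0 /\ (2*(a3*a4 + b3*b4)*(a3*b4 - b3*a4)) * (2*(a4*a1 + b4*b1)*(a4*b1 - b4*a1)) < 0) ->
  (2*(c1*c2 + d1*d2)*(c1*d2 - d1*c2)) <> 0 /\ (2*(c2*c3 + d2*d3)*(c2*d3 - d2*c3)) <> 0 /\ (2*(c3*c4 + d3*d4)*(c3*d4 - d3*c4)) <> 0 /\ (2*(c4*c1 + d4*d1)*(c4*d1 - d4*c1)) <> 0 /\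
  (((2*(c1*c2 + d1*d2)*(c1*d2 - d1*c2)) * (2*(c4*c1 + d4*d1)*(c4*d1 - d4*c1)) < 0 /\ (2*(c2*c3 + d2*d3)*(c2*d3 - d2*c3)) * (2*(c3*c4 + d3*d4)*(c3*d4 - d3*c4)) < 0) \/ ((2*(c1*c2 + d1*d2)*(c1*d2 - d1*c2)) * (2*(c2*c3 + d2*d3)*(c2*d3 - d2*c3)) < 0 /\ (2*(c3*c4 + d3*d4)*(c3*d4 - d3*c4)) * (2*(c4*c1 + d4*d1)*(c4*d1 - d4*c1)) < 0)).
Proof.
  intros Haa Hbb Hab Hcc Hdd Hcd Hca Hcb Hda Hdb h1 h2 h3 n1 n2 n3 n4 E Hp.
  destruct (rows a1 a2 a3 a4 b1 b2 b3 b4 c1 c2 c3 c4 d1 d2 d3 d4 Haa Hbb Hab Hcc Hdd Hcd Hca Hcb Hda Hdb) as (r12 & r13 & r14 & r23 & r24 & r34).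
  destruct (hodge a1 a2 a3 a4 b1 b2 b3 b4 c1 c2 c3 c4 d1 d2 d3 d4 Haa Hbb Hab Hcc Hdd Hcd Hca Hcb Hda Hdb) as (g12 & g34 & g23 & g14 & g13 & g24).
  pose proof (delta_sq a1 a2 a3 a4 b1 b2 b3 b4 c1 c2 c3 c4 d1 d2 d3 d4 Haa Hbb Hab Hcc Hdd Hcd Hca Hcb Hda Hdb) as Hd.
  assert (e1 : (c1*c2 + d1*d2) = -(a1*a2 + b1*b2)) by lra.
  assert (e2 : (c2*c3 + d2*d3) = -(a2*a3 + b2*b3)) by lra.
  assert (e3 : (c3*c4 + d3*d4) = -(a3*a4 + b3*b4)) by lra.
  assert (e4 : (c4*c1 + d4*d1) = -(a4*a1 + b4*b1)) by lra.
  assert (f1 : (c1*d2 - d1*c2) = (delta a1 a2 a3 a4 b1 b2 b3 b4 c1 c2 c3 c4 d1 d2 d3 d4) * (a3*b4 - b3*a4)) by (apply Rminus_diag_uniq; rewrite <- g12; ring).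
  assert (f2 : (c2*d3 - d2*c3) = -((delta a1 a2 a3 a4 b1 b2 b3 b4 c1 c2 c3 c4 d1 d2 d3 d4) * (a4*b1 - b4*a1))) by (apply Rminus_diag_uniq; rewrite <- g23; ring).
  assert (f3 : (c3*d4 - d3*c4) = (delta a1 a2 a3 a4 b1 b2 b3 b4 c1 c2 c3 c4 d1 d2 d3 d4) * (a1*b2 - b1*a2)) by (apply Rminus_diag_uniq; rewrite <- g34; ring).
  assert (f4 : (c4*d1 - d4*c1) = -((delta a1 a2 a3 a4 b1 b2 b3 b4 c1 c2 c3 c4 d1 d2 d3 d4) * (a2*b3 - b2*a3))) by (apply Rminus_diag_uniq; rewrite <- Ropp_0, <- g14; ring).
  rewrite e1, e2, e3, e4, f1, f2, f3, f4.
  apply signs; auto.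
  - ring.
  - match goal with |- 0 <= ?x => replace x with ((a1*a1+b1*b1)*(a2*a2+b2*b2)*(a3*a3+b3*b3)*(a4*a4+b4*b4)) by ring end.
    pose proof (Rle_0_sqr a1); pose proof (Rle_0_sqr a2); pose proof (Rle_0_sqr a3); pose proof (Rle_0_sqr a4).
    pose proof (Rle_0_sqr b1); pose proof (Rle_0_sqr b2); pose proof (Rle_0_sqr b3); pose proof (Rle_0_sqr b4).
    unfold Rsqr in *.
    repeat apply Rmult_le_pos; lra.
  - ring.
  - match goal with |- 0 <= ?x => replace x with ((a1*a1+b1*b1)*(a2*a2+b2*b2)*(a3*a3+b3*b3)*(a4*a4+b4*b4)) by ring end.
    pose proof (Rle_0_sqr a1); pose proof (Rle_0_sqr a2); pose proof (Rle_0_sqr a3); pose proof (Rle_0_sqr a4).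
    pose proof (Rle_0_sqr b1); pose proof (Rle_0_sqr b2); pose proof (Rle_0_sqr b3); pose proof (Rle_0_sqr b4).
    unfold Rsqr in *.
    repeat apply Rmult_le_pos; lra.
Qed.

Lemma imcw_csq u v : imcw (csq u) (csq v) =
  2 * (re u * re v + im u * im v) * (re u * im v - im u * re v).
Proof. destruct u, v; unfold imcw, csq, cmul; simpl; ring. Qed.

Lemma cabs_csq u : cabs (csq u) = re u * re u + im u * im u.
Proof.
  destruct u as [x y]; unfold cabs, csq, cmul; simpl.
  replace ((x * x - y * y) * (x * x - y * y) + (x * y + y * x) * (x * y + y * x))
    with ((x*x + y*y) * (x*x + y*y)) by ring.
  apply sqrt_square. pose proof (Rle_0_sqr x); pose proof (Rle_0_sqr y); unfold Rsqr in *; lra.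
Qed.

Lemma zsum A B C D :
  re (z1 A B C D) + re (z2 A B C D) + re (z3 A B C D) + re (z4 A B C D) = 0 /\
  im (z1 A B C D) + im (z2 A B C D) + im (z3 A B C D) + im (z4 A B C D) = 0.
Proof. destruct A, B, C, D; unfold z1, z2, z3, z4, csub; simpl; split; ring. Qed.

Lemma ss_pos r i : 0 < i * (2*r*i) -> 0 < r.
Proof. intros H. destruct (Rlt_or_le 0 r); auto. exfalso.
  assert (0 <= i*i) by (pose proof (Rle_0_sqr i); unfold Rsqr in *; lra).
  replace (i*(2*r*i)) with (2*r*(i*i)) in H by ring. nra. Qed.

Lemma csub_cadd K w : csub (cadd K w) K = w.
Proof. destruct K, w; unfold csub, cadd; simpl; f_equal; ring. Qed.

Lemma dual_close (K v1 v2 v3 v4 : Cpt) :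
  dot4 (re v1) (re v2) (re v3) (re v4) (re v1) (re v2) (re v3) (re v4) = 1 ->
  dot4 (im v1) (im v2) (im v3) (im v4) (im v1) (im v2) (im v3) (im v4) = 1 ->
  dot4 (re v1) (re v2) (re v3) (re v4) (im v1) (im v2) (im v3) (im v4) = 0 ->
  csub K (cadd (cadd (cadd K (csq v1)) (csq v2)) (csq v3)) = csq v4.
Proof.
  destruct K, v1, v2, v3, v4; unfold dot4, csub, cadd, csq, cmul; simpl; intros; f_equal; lra.
Qed.

Lemma good_of z w : imcw z w <> 0 -> good_pair z w.
Proof.
  intros H. unfold good_pair. repeat split; auto; intro E; subst; apply H;
  unfold imcw, czero; simpl; ring.
Qed.

Theorem theorem4p1 :
  forall (A B Cc D : Cpt) (u1 u2 u3 u4 v1 v2 v3 v4 : Cpt) (K : Cpt),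
    nondegenerate A B Cc D ->
    self_intersecting A B Cc D ->
    perimeter A B Cc D = 2 ->
    admissible_roots A B Cc D u1 u2 u3 u4 ->
    orthonormal_basis_of_perp u1 u2 u3 u4 v1 v2 v3 v4 ->
    let L := cadd K (csq v1) in
    let M := cadd L (csq v2) in
    let N := cadd M (csq v3) in
    csub K N = csq v4 /\ self_intersecting K L M N.
Proof.
  intros A B Cc D u1 u2 u3 u4 v1 v2 v3 v4 K Hnd Hsi Hper Had Hon.
  cbv zeta.
  destruct Had as (Hu1 & Hu2 & Hu3 & Hu4 & Hs1 & Hs2 & Hs3).
  unfold orthonormal_basis_of_perp in Hon. cbv zeta in Hon.
  destruct Hon as (o1 & o2 & o3 & o4 & o5 & o6 & o7).
  destruct Hnd as ((_&_&n1)&(_&_&n2)&(_&_&n3)&(_&_&n4)).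
  destruct Hsi as [_ Hseg].
  pose proof (sep_quad A B Cc D n1 n2 n3 n4 Hseg) as Hp.
  destruct (quad_facts A B Cc D) as (_&_&_&_&_&_&_&_&Hsum).
  destruct (zsum A B Cc D) as [zr zi].
  unfold perimeter in Hper.
  unfold pp1, pp2, pp3, pp4 in Hp, Hsum.
  unfold same_sign in Hs1, Hs2, Hs3.
  rewrite <- ?Hu1, <- ?Hu2, <- ?Hu3, <- ?Hu4 in n1; rewrite <- ?Hu1, <- ?Hu2, <- ?Hu3, <- ?Hu4 in n2; rewrite <- ?Hu1, <- ?Hu2, <- ?Hu3, <- ?Hu4 in n3; rewrite <- ?Hu1, <- ?Hu2, <- ?Hu3, <- ?Hu4 in n4; rewrite <- ?Hu1, <- ?Hu2, <- ?Hu3, <- ?Hu4 in Hp; rewrite <- ?Hu1, <- ?Hu2, <- ?Hu3, <- ?Hu4 in Hsum; rewrite <- ?Hu1, <- ?Hu2, <- ?Hu3, <- ?Hu4 in Hs1; rewrite <- ?Hu1, <- ?Hu2, <- ?Hu3, <- ?Hu4 in Hs2; rewrite <- ?Hu1, <- ?Hu2, <- ?Hu3, <- ?Hu4 in Hs3; rewrite <- ?Hu1, <- ?Hu2, <- ?Hu3, <- ?Hu4 in zr; rewrite <- ?Hu1, <- ?Hu2, <- ?Hu3, <- ?Hu4 in zi; rewrite <- ?Hu1, <- ?Hu2, <- ?Hu3, <- ?Hu4 in Hper.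
  rewrite ?imcw_csq in n1; rewrite ?imcw_csq in n2; rewrite ?imcw_csq in n3; rewrite ?imcw_csq in n4; rewrite ?imcw_csq in Hp; rewrite ?imcw_csq in Hsum; rewrite ?imcw_csq in Hs1; rewrite ?imcw_csq in Hs2; rewrite ?imcw_csq in Hs3.
  rewrite ?cabs_csq in Hper.
  unfold imcw in Hs1, Hs2, Hs3.
  apply ss_pos in Hs1. apply ss_pos in Hs2. apply ss_pos in Hs3.
  unfold csq, cmul in zr, zi; simpl in zr, zi.
  assert (Haa : dot4 (re u1) (re u2) (re u3) (re u4) (re u1) (re u2) (re u3) (re u4) = 1) by (unfold dot4; lra).
  assert (Hbb : dot4 (im u1) (im u2) (im u3) (im u4) (im u1) (im u2) (im u3) (im u4) = 1) by (unfold dot4; lra).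
  assert (Hab : dot4 (re u1) (re u2) (re u3) (re u4) (im u1) (im u2) (im u3) (im u4) = 0) by (unfold dot4; lra).
  pose proof (core (re u1) (re u2) (re u3) (re u4) (im u1) (im u2) (im u3) (im u4)
                   (re v1) (re v2) (re v3) (re v4) (im v1) (im v2) (im v3) (im v4)
                   Haa Hbb Hab o1 o2 o3 o4 o5 o6 o7 Hs1 Hs2 Hs3 n1 n2 n3 n4 Hsum Hp) as Hc.
  rewrite <- !imcw_csq in Hc.
  destruct Hc as (m1 & m2 & m3 & m4 & Hq).
  pose proof (dual_close K v1 v2 v3 v4 o1 o2 o3) as HKN.
  set (L := cadd K (csq v1)). set (M := cadd L (csq v2)). set (N := cadd M (csq v3)).
  assert (Ez1 : z1 K L M N = csq v1) by (unfold z1, L; apply csub_cadd).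
  assert (Ez2 : z2 K L M N = csq v2) by (unfold z2, M; apply csub_cadd).
  assert (Ez3 : z3 K L M N = csq v3) by (unfold z3, N; apply csub_cadd).
  assert (Ez4 : z4 K L M N = csq v4) by (unfold z4; exact HKN).
  split; [exact HKN|]. split.
  - unfold nondegenerate. rewrite Ez1, Ez2, Ez3, Ez4.
    split; [|split; [|split]]; apply good_of; assumption.
  - destruct Hq as [X|Y].
    + left. apply inter1; unfold pp1, pp2, pp3, pp4; rewrite ?Ez1, ?Ez2, ?Ez3, ?Ez4; tauto.
    + right. apply inter2; unfold pp1, pp2, pp3, pp4; rewrite ?Ez1, ?Ez2, ?Ez3, ?Ez4; tauto.
Qed.
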